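(* Let $E$, $D$, $S$ be binary random variables taking values in $\{0,1\}$ such that every joint cell probability $P(E=e,D=d,S=s)$ is positive, and write $p(d,e)=P(S=1\mid D=d,E=e)$. Suppose there is no interaction of $E$ and $D$ on $S$ on the risk difference scale, i.e. $\mathrm{RD}_{ES\mid D=1}=\mathrm{RD}_{ES\mid D=0}$ (equivalently $p(1,1)-p(1,0)=p(0,1)-p(0,0)$). (a) If $p(d,e)$ is non-decreasing in both $d$ and $e$, or non-increasing in both $d$ and $e$, then $\mathrm{OR}_{ED\mid S=1}\le \mathrm{OR}_{ED}$. (b) If $p(d,e)$ is non-decreasing in one of $d,e$ and non-increasing in the other, then $\mathrm{OR}_{ED\mid S=1}\ge \mathrm{OR}_{ED}$.
   Context: For binary random variables $A,B$ and a random variable $C$, $\mathrm{OR}_{AB\mid C=c}=\frac{P(A=1,B=1\mid C=c)P(A=0,B=0\mid C=c)}{P(A=1,B=0\mid C=c)P(A=0,B=1\mid C=c)}$, $\mathrm{OR}_{AB}$ is the unconditional version, and $\mathrm{RD}_{AB\mid C=c}=P(B=1\mid A=1,C=c)-P(B=1\mid A=0,C=c)$. ''Non-decreasing in $d$'' means $p(1,e)\ge p(0,e)$ for each $e$; ''non-decreasing in $e$'' means $p(d,1)\ge p(d,0)$ for each $d$; non-increasing analogously. *)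

(* Defs.v *)
(* A joint law of three binary random variables (E, D, S),
   encoded as the table of cell probabilities P e d s = P(E=e, D=d, S=s),
   with true = 1 and false = 0. *)
From mathcomp Require Import all_boot all_order all_algebra.
Set Implicit Arguments. Unset Strict Implicit. Unset Printing Implicit Defensive.
Import Order.TTheory GRing.Theory Num.Theory.
Local Open Scope ring_scope.

Section Defs.
Variable R : realFieldType.
Definition joint := bool -> bool -> bool -> R.

Definition is_pos_joint (P : joint) : Prop :=
  (forall e d s, 0 < P e d s) /\
  \sum_(e : bool) \sum_(d : bool) \sum_(s : bool) P e d s = 1.

Definition prob (P : joint) (A : bool -> bool -> bool -> bool) : R :=
  \sum_(e : bool) \sum_(d : bool) \sum_(s : bool) (if A e d s then P e d s else 0).

Definition cprob (P : joint) (A B : bool -> bool -> bool -> bool) : R :=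
  prob P (fun e d s => A e d s && B e d s) / prob P B.

Definition pS (P : joint) (d e : bool) : R :=
  cprob P (fun _ _ s => s) (fun e' d' _ => (e' == e) && (d' == d)).

Definition pED_S (P : joint) (e d s : bool) : R :=
  cprob P (fun e' d' _ => (e' == e) && (d' == d)) (fun _ _ s' => s' == s).

Definition pED (P : joint) (e d : bool) : R :=
  prob P (fun e' d' _ => (e' == e) && (d' == d)).

Definition OR_ED_S (P : joint) (s : bool) : R :=
  (pED_S P true true s * pED_S P false false s) /
  (pED_S P true false s * pED_S P false true s).

Definition OR_ED (P : joint) : R :=
  (pED P true true * pED P false false) / (pED P true false * pED P false true).

Definition RD_ES_D (P : joint) (d : bool) : R := pS P d true - pS P d false.

Definition nondec_d (P : joint) : Prop := forall e, pS P false e <= pS P true e.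
Definition noninc_d (P : joint) : Prop := forall e, pS P true e <= pS P false e.
Definition nondec_e (P : joint) : Prop := forall d, pS P d false <= pS P d true.
Definition noninc_e (P : joint) : Prop := forall d, pS P d true <= pS P d false.
End Defs.

(* Main.v *)
Require Import Defs.
From mathcomp Require Import all_boot all_order all_algebra.
From mathcomp Require Import ring lra.
Import Order.TTheory GRing.Theory Num.Theory.
Local Open Scope ring_scope.

Lemma divle (R : realFieldType) (A B C D : R) : 0 < B -> 0 < D -> A * D <= C * B -> A / B <= C / D.
Proof. by move=> hB hD h; rewrite ler_pdivrMr // mulrAC ler_pdivlMr. Qed.

Lemma core (R : realFieldType) (p11 p10 p01 p00 n11 n10 n01 n00 : R) :
  0 < p11 -> 0 < p10 -> 0 < p01 -> 0 < p00 ->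
  0 < n11 -> 0 < n10 -> 0 < n01 -> 0 < n00 ->
  p11 - p10 = p01 - p00 ->
  ((p11 - p10) * (p00 - p10) <= 0 ->
   (p11*n11)*(p00*n00)/((p01*n10)*(p10*n01)) <= n11*n00/(n10*n01)) /\
  (0 <= (p11 - p10) * (p00 - p10) ->
   n11*n00/(n10*n01) <= (p11*n11)*(p00*n00)/((p01*n10)*(p10*n01))).
Proof.
move=> h1 h2 h3 h4 h5 h6 h7 h8 hrd.
have hp01 : p01 = p11 - p10 + p00 by rewrite hrd; ring.
have hN : 0 < n11 * n00 * n10 * n01 by rewrite !mulr_gt0.
have hid : (p11*n11)*(p00*n00) * (n10*n01) - n11*n00 * ((p01*n10)*(p10*n01))
   = (n11 * n00 * n10 * n01) * ((p11 - p10) * (p00 - p10)) by rewrite hp01; ring.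
split=> hs; apply: divle; rewrite ?mulr_gt0 //; rewrite -subr_ge0.
- rewrite -opprB hid oppr_ge0; exact: mulr_ge0_le0 (ltW hN) hs.
- rewrite hid; exact: mulr_ge0 (ltW hN) hs.
Qed.

Theorem mainTheorem3 (R : realFieldType) (P : joint R) :
  is_pos_joint P ->
  RD_ES_D P true = RD_ES_D P false ->
  (((nondec_d P /\ nondec_e P) \/ (noninc_d P /\ noninc_e P)) ->
     OR_ED_S P true <= OR_ED P) /\
  (((nondec_d P /\ noninc_e P) \/ (noninc_d P /\ nondec_e P)) ->
     OR_ED P <= OR_ED_S P true).
Proof.
move=> [Hp _].
have pSE : forall d e, pS P d e * (P e d true + P e d false) = P e d true.
  move=> d e; rewrite /pS /cprob /prob !big_bool.
  have h1 := Hp e d true; have h2 := Hp e d false.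
  case: d h1 h2; case: e => /= h1 h2; rewrite !(addr0, add0r) mulfVK //; apply: lt0r_neq0; exact: addr_gt0.
have pSp : forall d e, 0 < pS P d e.
  move=> d e; rewrite /pS /cprob /prob !big_bool.
  have h1 := Hp e d true; have h2 := Hp e d false.
  case: d h1 h2; case: e => /= h1 h2; rewrite !(addr0, add0r) divr_gt0 // addr_gt0 //.
have ORS : OR_ED_S P true = (P true true true * P false false true) / (P true false true * P false true true).
  rewrite /OR_ED_S /pED_S /cprob /prob !big_bool /= !(addr0, add0r).
  have := Hp true true true; have := Hp false false true; have := Hp true false true; have := Hp false true true.
  move=> h1 h2 h3 h4; have hS : 0 < P true true true + P true false true + (P false true true + P false false true).
    by rewrite !addr_gt0.
  field; rewrite ?(lt0r_neq0 h1, lt0r_neq0 h2, lt0r_neq0 h3, lt0r_neq0 h4, lt0r_neq0 hS) //.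
have ORE : OR_ED P = ((P true true true + P true true false) * (P false false true + P false false false)) / ((P true false true + P true false false) * (P false true true + P false true false)).
  by rewrite /OR_ED /pED /prob !big_bool /= !(addr0, add0r).
have e11 := pSE true true; have e00 := pSE false false; have e01 := pSE false true; have e10 := pSE true false.
have n11 : 0 < P true true true + P true true false by rewrite addr_gt0.
have n00 : 0 < P false false true + P false false false by rewrite addr_gt0.
have n10 : 0 < P true false true + P true false false by rewrite addr_gt0.
have n01 : 0 < P false true true + P false true false by rewrite addr_gt0.
rewrite ORS ORE /RD_ES_D /nondec_d /nondec_e /noninc_d /noninc_e.
move: e11 e00 e01 e10 n11 n00 n10 n01.
set N11 := P true true true + P true true false.
set N00 := P false false true + P false false false.
set N10 := P true false true + P true false false.
set N01 := P false true true + P false true false.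
move=> <- <- <- <- n11 n00 n10 n01 hrd.
have [Ca Cb] := @core R _ _ _ _ _ _ _ _ (pSp true true) (pSp true false) (pSp false true) (pSp false false) n11 n10 n01 n00 hrd.
split.
- move=> H; apply: Ca; case: H => [[hd he]|[hd he]].
    apply: mulr_ge0_le0; first by rewrite subr_ge0.
    by rewrite subr_le0.
  apply: mulr_le0_ge0; first by rewrite subr_le0.
  by rewrite subr_ge0.
- move=> H; apply: Cb; case: H => [[hd he]|[hd he]].
    apply: mulr_le0; first by rewrite subr_le0.
    by rewrite subr_le0.
  apply: mulr_ge0; first by rewrite subr_ge0.
  by rewrite subr_ge0.
Qed.
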